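(* Let $K$ be a field. The characteristic function $\mathbb Z^k\to K$ of a polyhedral region in $\mathbb Z^k$ is a hypergeometric term on $\mathbb Z^k$.
   Context: A half-space is $\{\vec z\in\mathbb Z^k:\vec v\cdot\vec z>n\}$ with $\vec v\in\mathbb Z^k$, $n\in\mathbb Z$. A polyhedral region is either $\mathbb Z^k$ or an intersection of finitely many half-spaces. A hypergeometric term on $\mathbb Z^k$ over $K$ is a function $f\colon\mathbb Z^k\to K$ such that for each $i\in\{1,\dots,k\}$ there are nonzero polynomials $A_i,B_i\in K[\vec z]$ with $A_i(\vec z)f(\vec z)=B_i(\vec z)f(\vec z+\vec e_i)$ for all $\vec z\in\mathbb Z^k$. *)

(* Defs.v *)
From HB Require Import structures.
From mathcomp Require Import all_boot all_order all_algebra.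
From mathcomp Require Import mpoly.
Set Implicit Arguments. Unset Strict Implicit. Unset Printing Implicit Defensive.
Import Order.TTheory GRing.Theory Num.Theory.
Local Open Scope ring_scope.

Definition zpt (k : nat) := 'I_k -> int.

Definition shift_e (k : nat) (z : zpt k) (i : 'I_k) : zpt k :=
  fun j => z j + (j == i)%:R.

Definition zdot (k : nat) (v z : zpt k) : int := \sum_(j < k) v j * z j.

Definition in_half_space (k : nat) (v : zpt k) (n : int) (z : zpt k) : bool :=
  n < zdot v z.

Definition polyhedral_region (k : nat) (S : zpt k -> bool) : Prop :=
  (forall z, S z) \/
  exists hs : seq (zpt k * int),
    forall z, S z = all (fun p => in_half_space p.1 p.2 z) hs.

Definition char_fun (K : fieldType) (k : nat) (S : zpt k -> bool) : zpt k -> K :=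
  fun z => if S z then 1 else 0.

Definition zptK (K : fieldType) (k : nat) (z : zpt k) : 'I_k -> K :=
  fun j => (z j)%:~R.

Definition hypergeometric_term (K : fieldType) (k : nat) (f : zpt k -> K) : Prop :=
  forall i : 'I_k, exists A B : {mpoly K[k]},
    A != 0 /\ B != 0 /\
    forall z : zpt k, A.@[zptK K z] * f z = B.@[zptK K z] * f (shift_e z i).

(* Main.v *)
Require Import Defs.
From HB Require Import structures.
From mathcomp Require Import all_boot all_order all_algebra.
From mathcomp Require Import mpoly.
From mathcomp Require Import zify.
From Stdlib Require Import Classical.
Import Order.TTheory GRing.Theory Num.Theory.
Local Open Scope ring_scope.

Lemma all_true (T : Type) (a : pred T) s : (forall x, a x) -> all a s.
Proof. by move=> H; elim: s => //= x s ->; rewrite H. Qed.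

Lemma all_eqP (T : Type) (p q : pred T) s :
  all (fun x => p x == q x) s -> all p s = all q s.
Proof. by elim: s => //= x s IH /andP [/eqP -> /IH ->]. Qed.

Lemma has_of_nall (T : Type) (a b : pred T) s :
  ~~ all a s -> (forall x, ~~ a x -> b x) -> has b s.
Proof.
move=> H Hab; elim: s H => //= x s IH.
by case E: (a x) => /= H; [rewrite IH ?orbT | rewrite Hab ?E].
Qed.

Arguments all_true {T a s}.
Arguments all_eqP {T p q s}.
Arguments has_of_nall {T a b s}.

Section Aux.
Variables (K : fieldType) (k : nat).

Lemma meval_prod (I : Type) (r : seq I) (P : pred I) (F : I -> {mpoly K[k]}) v :
  (\prod_(x <- r | P x) F x).@[v] = \prod_(x <- r | P x) (F x).@[v].
Proof. exact: (big_morph (meval v) (mevalM v) (meval1 v)). Qed.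

Lemma meval_sum (I : Type) (r : seq I) (P : pred I) (F : I -> {mpoly K[k]}) v :
  (\sum_(x <- r | P x) F x).@[v] = \sum_(x <- r | P x) (F x).@[v].
Proof. exact: (big_morph (meval v) (mevalD v) (meval0 v)). Qed.

Lemma nz_of_eval (p : {mpoly K[k]}) v : p.@[v] != 0 -> p != 0.
Proof. by apply: contraNneq => ->; rewrite meval0. Qed.

Lemma hyp_of_P (f : zpt k -> K) i (P : {mpoly K[k]}) : P != 0 ->
  (forall z, f z != f (shift_e z i) -> P.@[zptK K z] = 0) ->
  exists A B : {mpoly K[k]}, A != 0 /\ B != 0 /\
    forall z : zpt k, A.@[zptK K z] * f z = B.@[zptK K z] * f (shift_e z i).
Proof.
move=> Pn H; exists P, P; do 2!split => //.
move=> z; case: (eqVneq (f z) (f (shift_e z i))) => [->//|/H ->].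
by rewrite !mul0r.
Qed.

Lemma zdot_shift (v z : zpt k) i : zdot v (shift_e z i) = zdot v z + v i.
Proof.
rewrite /zdot /shift_e.
under eq_bigr => j _ do rewrite mulrDr.
rewrite big_split /=; congr (_ + _).
rewrite (bigD1 i) //= eqxx mulr1 big1 ?addr0 // => j /negPf->; by rewrite mulr0.
Qed.

Definition Lp (h : zpt k * int) (t : int) : {mpoly K[k]} :=
  \sum_(l < k) (h.1 l)%:~R *: 'X_l + ((t - h.2)%:~R)%:MP.

Lemma Lp_eval h t z : (Lp h t).@[zptK K z] = (zdot h.1 z + t - h.2)%:~R.
Proof.
rewrite /Lp mevalD meval_sum mevalC /zdot.
rewrite -addrA [RHS]intrD; congr (_ + _).
rewrite rmorph_sum /=; apply: eq_bigr => l _.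
by rewrite mevalZ mevalXU /zptK intrM.
Qed.

End Aux.

Theorem lemmaB20 (K : fieldType) (k : nat) (S : zpt k -> bool) :
  polyhedral_region S -> hypergeometric_term (char_fun K S).
Proof.
move=> HS i.
case: (classic (exists m : nat, (0 < m)%N /\ (m%:R : K) = 0)).
  move=> [m [m0 mK]].
  apply: (@hyp_of_P K k _ i (\prod_(a < m) ('X_i - (a%:R : K)%:MP))).
    rewrite prodf_seq_neq0; apply/allP => a _; apply/implyP => _.
    apply: (@nz_of_eval K k _ (fun _ => (a%:R : K) + 1)).
    by rewrite mevalB mevalXU mevalC addrC addKr oner_neq0.
  move=> z _; rewrite meval_prod; apply/eqP/prodf_eq0.
  have mz : (m%:Z != 0) by rewrite eqz_nat -lt0n.
  have r0 := modz_ge0 (z i) mz.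
  have rm : ((z i) %% m%:Z)%Z < m%:Z by apply: ltz_pmod; rewrite ltz_nat.
  have rl : (`|((z i) %% m%:Z)%Z| < m)%N by rewrite -ltz_nat gez0_abs.
  exists (Ordinal rl) => //.
  rewrite mevalB mevalXU mevalC /zptK /= subr_eq0.
  rewrite {1}(divz_eq (z i) m%:Z) intrD intrM /=.
  by apply/eqP; rewrite -[m%:~R]pmulrn mK mulr0 add0r [RHS]pmulrn gez0_abs.
move=> nochar.
have intK0 (c : int) : (c%:~R : K) = 0 -> c = 0.
  case: c => n.
    case: n => // n H; exfalso; apply: nochar; by exists n.+1.
  rewrite NegzE mulrNz => /eqP; rewrite oppr_eq0 => /eqP H.
  exfalso; apply: nochar; exists n.+1; split => //.
case: HS => [Hall | [hs Hhs]].
  apply: (@hyp_of_P K k _ i (1)); first exact: oner_neq0.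
  by move=> z; rewrite /char_fun !Hall eqxx.
apply: (@hyp_of_P K k _ i (\prod_(h <- hs | h.1 i != 0)
   \prod_(j < (2 * `|h.1 i|).+1) @Lp K k h (j%:Z - `|h.1 i|%:Z))).
  rewrite prodf_seq_neq0; apply: all_true => h; apply/implyP => hi.
  rewrite prodf_seq_neq0; apply/allP => j _; apply/implyP => _.
  apply/negP => /eqP E0.
  have e0 := @Lp_eval K k h (j%:Z - `|h.1 i|%:Z) (fun _ => 0).
  have e1 := @Lp_eval K k h (j%:Z - `|h.1 i|%:Z) (shift_e (fun _ => 0) i).
  rewrite E0 meval0 zdot_shift in e0 e1.
  have : ((h.1 i)%:~R : K) = 0.
    rewrite meval0 in e1.
    have -> : h.1 i = (zdot h.1 (fun=>0) + h.1 i + (j%:Z - `|h.1 i|%:Z) - h.2)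
      - (zdot h.1 (fun=>0) + (j%:Z - `|h.1 i|%:Z) - h.2) by lia.
    by rewrite intrB -e0 -e1 subr0.
  by move/intK0/eqP; rewrite (negPf hi).
move=> z; rewrite /char_fun !Hhs.
have [hall | nall] := boolP (all (fun h => (in_half_space h.1 h.2 z) ==
      (in_half_space h.1 h.2 (shift_e z i))) hs).
  by rewrite (all_eqP hall) eqxx.
move=> _; rewrite meval_prod; apply/eqP; rewrite prodf_seq_eq0.
apply: (has_of_nall nall) => h /= Hne.
rewrite /in_half_space zdot_shift in Hne.
have hi : h.1 i != 0.
  by apply: contraNneq Hne => ->; rewrite addr0.
rewrite hi /= meval_prod.
have Hb : `|zdot h.1 z - h.2| <= `|h.1 i|.
  move: Hne; set d := zdot h.1 z; set c := h.1 i; set n := h.2.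
  case E1: (n < d); case E2: (n < d + c) => // _; lia.
have jl : (absz (h.2 - zdot h.1 z + (absz (h.1 i))%:Z)%R < (2 * absz (h.1 i)).+1)%N.
  rewrite -ltz_nat; lia.
apply/prodf_eq0; exists (Ordinal jl) => //=.
rewrite (@Lp_eval K k) gez0_abs; last lia.
apply/eqP; have -> : zdot h.1 z + (h.2 - zdot h.1 z + (absz (h.1 i))%:Z - (absz (h.1 i))%:Z) - h.2 = 0 by lia.
by [].
Qed.
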